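(* Let $R=K[X_1,\dots,X_d]$ be a polynomial ring over a field $K$, $I$ a monomial ideal of $R$ and $J$ any ideal of $R$. Then $I:_RJ^\infty$ is a monomial ideal of $R$.
   Context: $I:_RJ^\infty=\bigcup_k(I:_RJ^k)$. *)

(* Defs.v *)
From HB Require Import structures.
From mathcomp Require Import all_boot all_algebra.
From mathcomp Require Import mpoly.
Set Implicit Arguments. Unset Strict Implicit. Unset Printing Implicit Defensive.
Import GRing.Theory.
Local Open Scope ring_scope.

Section IdealDefs.
Variables (K : fieldType) (d : nat).
Local Notation P := {mpoly K[d]}.

Definition subsetR := P -> Prop.

Definition is_ideal (I : subsetR) : Prop :=
  [/\ I 0, (forall f g, I f -> I g -> I (f + g)) & (forall r f, I f -> I (r * f))].

Definition ideal_gen (S : subsetR) : subsetR := fun f =>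
  exists rs : seq (P * P),
    (forall x, x \in rs -> S x.2) /\ f = \sum_(x <- rs) x.1 * x.2.

Definition ideal_prod (I J : subsetR) : subsetR :=
  ideal_gen (fun h => exists f g, [/\ I f, J g & h = f * g]).

Fixpoint ideal_pow (J : subsetR) (k : nat) : subsetR :=
  match k with
  | 0 => ideal_gen (fun h => h = 1)
  | k'.+1 => ideal_prod (ideal_pow J k') J
  end.

Definition colon (I J : subsetR) : subsetR := fun f => forall g, J g -> I (f * g).

Definition saturation (I J : subsetR) : subsetR := fun f =>
  exists k, colon I (ideal_pow J k) f.

Definition monomial_ideal (I : subsetR) : Prop :=
  exists S : subsetR,
    (forall m, S m -> exists e : 'X_{1..d}, m = 'X_[e]) /\
    (forall f, I f <-> ideal_gen S f).

End IdealDefs.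

(* Main.v *)
Require Import Defs.
From HB Require Import structures.
From mathcomp Require Import all_boot all_algebra.
From mathcomp Require Import mpoly.
From mathcomp Require Import ring zify.
From Stdlib Require Import ClassicalEpsilon.
Set Implicit Arguments. Unset Strict Implicit. Unset Printing Implicit Defensive.
Import GRing.Theory.
Local Open Scope ring_scope.

Section S.
Variables (K : fieldType) (d : nat).
Local Notation P := {mpoly K[d]}.
Implicit Types (S T I J L : P -> Prop).

Lemma ideal_sum T (A : eqType) (r : seq A) (F : A -> P) : is_ideal T ->
  (forall i, i \in r -> T (F i)) -> T (\sum_(i <- r) F i).
Proof.
case=> T0 TD TM; elim: r => [|a r IH] H; first by rewrite big_nil.
rewrite big_cons; apply: TD; first by apply: H; rewrite inE eqxx.
by apply: IH => i Hi; apply: H; rewrite inE Hi orbT.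
Qed.

Lemma ideal_gen_ideal S : is_ideal (ideal_gen S).
Proof.
split.
- by exists [::]; split => //; rewrite big_nil.
- move=> f g [r1 [H1 ->]] [r2 [H2 ->]]; exists (r1 ++ r2); split; last by rewrite big_cat.
  by move=> x; rewrite mem_cat => /orP[/H1|/H2].
- move=> r f [rs [H ->]]; exists (map (fun x => (r * x.1, x.2)) rs); split.
  + by move=> x /mapP [y Hy] ->; exact: (H y Hy).
  + by rewrite big_map mulr_sumr; apply: eq_bigr => i _; rewrite mulrA.
Qed.

Lemma ideal_gen_min S T : is_ideal T -> (forall x, S x -> T x) ->
  forall f, ideal_gen S f -> T f.
Proof.
move=> HT HS f [rs [H ->]]; apply: ideal_sum => // i Hi.
by case: HT => _ _ HTM; apply: HTM; apply/HS/H.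
Qed.

Lemma ideal_gen_in S x : S x -> ideal_gen S x.
Proof.
by move=> Hx; exists [:: (1, x)]; split; [move=> y; rewrite inE => /eqP -> | rewrite big_seq1 mul1r].
Qed.

Definition suppP (Pr : 'X_{1..d} -> Prop) (p : P) := forall m, m \in msupp p -> Pr m.

Lemma suppP0 Pr : suppP Pr 0.
Proof. by move=> m; rewrite msupp0. Qed.

Lemma suppPD Pr p q : suppP Pr p -> suppP Pr q -> suppP Pr (p + q).
Proof. by move=> Hp Hq m /msuppD_le; rewrite mem_cat => /orP[/Hp|/Hq]. Qed.

Lemma suppPN Pr p : suppP Pr p -> suppP Pr (- p).
Proof. by move=> Hp m; rewrite (perm_mem (msuppN _)) => /Hp. Qed.

Lemma suppPB Pr p q : suppP Pr p -> suppP Pr q -> suppP Pr (p - q).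
Proof. by move=> Hp Hq; apply: suppPD => //; apply: suppPN. Qed.

Lemma suppPM (Pa Pb Pc : 'X_{1..d} -> Prop) p q :
  (forall a b, Pa a -> Pb b -> Pc (a + b)%MM) -> suppP Pa p -> suppP Pb q -> suppP Pc (p * q).
Proof.
move=> H Hp Hq m /msuppM_le /allpairsP [[a b] /= [Ha Hb ->]].
by apply: H; [apply: Hp | apply: Hq].
Qed.

Lemma suppPX Pr m : Pr m -> suppP Pr 'X_[m].
Proof. by move=> H k; rewrite msuppX inE => /eqP ->. Qed.

Lemma suppPW (Pr Pr' : 'X_{1..d} -> Prop) p : (forall m, Pr m -> Pr' m) -> suppP Pr p -> suppP Pr' p.
Proof. by move=> H Hp m /Hp /H. Qed.

Lemma suppP_ideal Pr : (forall a b, Pr a -> Pr (b + a)%MM) -> is_ideal (suppP Pr).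
Proof.
move=> Hup; split; [exact: suppP0 | exact: suppPD |].
move=> r f Hf; apply: (suppPM (Pa := fun _ => True) (Pb := Pr)) => //.
by move=> a b _ /Hup; apply.
Qed.

Lemma ideal_of_supp T p : is_ideal T -> suppP (fun m => T 'X_[m]) p -> T p.
Proof.
move=> HT Hp; rewrite (mpolyE p); apply: ideal_sum => // m Hm.
rewrite -mul_mpolyC; case: HT => _ _ HTM; apply: HTM; exact: Hp.
Qed.

Lemma mono_char I : is_ideal I -> monomial_ideal I ->
  forall f, I f <-> suppP (fun m => I 'X_[m]) f.
Proof.
move=> HI [S [HS HSI]] f; split; last exact: ideal_of_supp.
move/HSI; apply: ideal_gen_min.
  apply: suppP_ideal => a b Ha; rewrite mpolyXD; by case: HI => _ _ HTM; apply: HTM.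
move=> x Sx; case: (HS x Sx) => e Ex; rewrite Ex; apply: suppPX; rewrite -Ex.
by apply/HSI/ideal_gen_in.
Qed.

Lemma mono_of L : is_ideal L -> (forall f, L f -> suppP (fun m => L 'X_[m]) f) ->
  monomial_ideal L.
Proof.
move=> HL H; exists (fun p => exists m, p = 'X_[m] /\ L p); split.
  by move=> p [m [-> _]]; exists m.
move=> f; split; last first.
  by apply: ideal_gen_min => // x [m [_ ?]].
move=> Lf; rewrite (mpolyE f).
apply: ideal_sum; first exact: ideal_gen_ideal.
move=> m Hm; rewrite -mul_mpolyC; case: (ideal_gen_ideal (fun p => exists m, p = 'X_[m] /\ L p)) => _ _ HTM; apply: HTM.
by apply: ideal_gen_in; exists m; split => //; exact: (H f Lf m Hm).
Qed.


Lemma pow_ideal J k : is_ideal (ideal_pow J k).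
Proof. by case: k => [|k] /=; apply: ideal_gen_ideal. Qed.

Lemma pow_succ J k f : is_ideal J -> ideal_pow J k.+1 f -> ideal_pow J k f.
Proof.
move=> HJ /=; apply: ideal_gen_min; first exact: pow_ideal.
move=> h [a [b [Ha Hb ->]]]; rewrite mulrC.
by case: (pow_ideal J k) => _ _ HTM; apply: HTM.
Qed.

Lemma pow_le J k n f : is_ideal J -> (k <= n)%N -> ideal_pow J n f -> ideal_pow J k f.
Proof.
move=> HJ; elim: n => [|n IH]; first by rewrite leqn0 => /eqP ->.
rewrite leq_eqVlt => /orP[/eqP -> //|]; rewrite ltnS => Hk Hf.
by apply: IH => //; apply: pow_succ.
Qed.

Lemma pow_expr J g k : J g -> ideal_pow J k (g ^+ k).
Proof.
move=> Hg; elim: k => [|k IH]; first by rewrite expr0; apply: ideal_gen_in.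
by rewrite exprSr /=; apply: ideal_gen_in; exists (g ^+ k), g.
Qed.

Lemma sat_ideal I J : is_ideal I -> is_ideal J -> is_ideal (saturation I J).
Proof.
move=> [I0 ID IM] HJ; split.
- by exists 0%N => g _; rewrite mul0r.
- move=> f g [a Ha] [b Hb]; exists (maxn a b) => h Hh; rewrite mulrDl; apply: ID.
  + by apply: Ha; apply: pow_le Hh => //; rewrite leq_maxl.
  + by apply: Hb; apply: pow_le Hh => //; rewrite leq_maxr.
- move=> r f [a Ha]; exists a => h Hh; rewrite -mulrA; apply: IM; exact: Ha.
Qed.

Definition keep (b : pred 'X_{1..d}) (p : P) : P :=
  \sum_(m <- msupp p | b m) p@_m *: 'X_[m].

Lemma keepE b p m : (keep b p)@_m = if b m then p@_m else 0.
Proof.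
rewrite /keep raddf_sum /=.
under eq_bigr => k _ do rewrite mcoeffZ mcoeffX.
rewrite big_mkcond /=.
case Hm: (m \in msupp p).
  rewrite (bigD1_seq m) ?msupp_uniq //= eqxx mulr1.
  rewrite big1 ?addr0; first by case: (b m).
  by move=> k /negbTE Hk; rewrite Hk mulr0; case: (b k).
rewrite big1_seq; last first.
  move=> k /andP[_ Hk]; have -> : (k == m) = false.
    by apply/negbTE; apply: contraFN Hm => /eqP <-.
  by rewrite mulr0; case: (b k).
have -> : p@_m = 0 by apply/eqP; rewrite mcoeff_eq0 Hm.
by case: (b m).
Qed.

Lemma keep_supp b p m : m \in msupp (keep b p) -> b m /\ m \in msupp p.
Proof.
rewrite mcoeff_msupp keepE; case: (b m) => //; last by rewrite eqxx.
by rewrite -mcoeff_msupp.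
Qed.

Definition adeg (A : {set 'I_d}) (m : 'X_{1..d}) : nat := (\sum_(i in A) m i)%N.

Lemma adegD A a b : adeg A (a + b)%MM = (adeg A a + adeg A b)%N.
Proof. by rewrite /adeg -big_split /=; apply: eq_bigr => i _; rewrite mnmDE. Qed.

Definition offA (A : {set 'I_d}) (b : 'X_{1..d}) := forall i, i \in A -> b i = 0%N.

Lemma adeg0_off A b : adeg A b = 0%N -> offA A b.
Proof.
move=> H i Hi; apply/eqP; rewrite -leqn0 -H /adeg (bigD1 i) //=; exact: leq_addr.
Qed.

Definition decP (Q : Prop) : bool := if excluded_middle_informative Q then true else false.
Lemma decPP (Q : Prop) : decP Q <-> Q.
Proof. by rewrite /decP; case: excluded_middle_informative. Qed.

Lemma core (A : {set 'I_d}) (Qp : 'X_{1..d} -> Prop) h g :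
  (forall a b, Qp a -> Qp (a + b)%MM) ->
  (forall a b, offA A b -> Qp (a + b)%MM -> Qp a) ->
  (exists2 d0, d0 \in msupp g & offA A d0) ->
  suppP Qp (h * g) -> suppP Qp h.
Proof.
move=> Qup Qoff [d0 Hd0 Od0] Hhg m0 Hm0.
apply: Classical_Prop.NNPP => Nm0.
pose h' := keep (fun m => ~~ decP (Qp m)) h.
have Hhq : suppP Qp (h - h').
  move=> m; rewrite mcoeff_msupp mcoeffB keepE.
  case E: (decP (Qp m)) => /=; first by move=> _; apply/decPP; rewrite E.
  by rewrite subrr eqxx.
have Hh'g : suppP Qp (h' * g).
  have -> : h' * g = h * g - (h - h') * g by ring.
  apply: suppPB => //; apply: (suppPM (Pa := Qp) (Pb := fun _ => True)) => //.
  by move=> a b Ha _; apply: Qup.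
have Sh' : suppP (fun m => ~ Qp m) h'.
  by move=> m /keep_supp [/negP H _] Hq; apply: H; apply/decPP.
have m0h' : m0 \in msupp h'.
  have E : decP (Qp m0) = false by apply/negP => /decPP.
  rewrite mcoeff_msupp keepE E /=.
  by rewrite -mcoeff_msupp.
pose ad := adeg A.
have Hex : exists k, has (fun m => ad m == k) (msupp h').
  by exists (ad m0); apply/hasP; exists m0.
case: (ex_minnP Hex) => k0 /hasP [m1 Hm1 /eqP Ek0] Hmin.
pose hl := keep (fun m => ad m == k0) h'.
pose hh := h' - hl.
pose gl := keep (fun m => ad m == 0%N) g.
pose gh := g - gl.
have hl0 : hl != 0.
  apply/eqP => /(congr1 (mcoeff m1)); rewrite keepE Ek0 eqxx mcoeff0 => /eqP.
  by rewrite mcoeff_eq0 Hm1.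
have ad0 : ad d0 = 0%N by rewrite /ad /adeg big1 // => i /Od0.
have gl0 : gl != 0.
  apply/eqP => /(congr1 (mcoeff d0)); rewrite keepE ad0 eqxx mcoeff0 => /eqP.
  by rewrite mcoeff_eq0 Hd0.
have Shl : suppP (fun m => ad m = k0 /\ ~ Qp m) hl.
  by move=> m /keep_supp [/eqP -> /Sh'].
have Shh : suppP (fun m => (k0 < ad m)%N) hh.
  move=> m; rewrite mcoeff_msupp mcoeffB (keepE _ h' m).
  case E: (ad m == k0); first by rewrite subrr eqxx.
  rewrite subr0 -mcoeff_msupp => Hm; rewrite ltn_neqAle.
  have -> : (k0 <= ad m)%N by apply: Hmin; apply/hasP; exists m.
  by rewrite andbT eq_sym E.
have Sgl : suppP (fun m => ad m = 0%N) gl by move=> m /keep_supp [/eqP -> _].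
have Sgh : suppP (fun m => (0 < ad m)%N) gh.
  move=> m; rewrite mcoeff_msupp mcoeffB (keepE _ g m).
  case E: (ad m == 0%N); first by rewrite subrr eqxx.
  by rewrite lt0n E.
have P0 : hl * gl != 0 by rewrite mulf_neq0.
have [mu Hmu] : exists mu, mu \in msupp (hl * gl).
  case E: (msupp (hl * gl)) => [|mu s]; last by exists mu; rewrite inE eqxx.
  by move: P0; rewrite -msupp_eq0 E.
have Smu : ad mu = k0 /\ ~ Qp mu.
  have HP : forall a b, (ad a = k0 /\ ~ Qp a) -> ad b = 0%N ->
      (ad (a + b)%MM = k0 /\ ~ Qp (a + b)%MM).
    move=> a b [Ha Hq] Hb; rewrite /ad adegD -/ad Ha Hb addn0; split => // Hab.
    by apply: Hq; apply: Qoff Hab; apply: adeg0_off.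
  have H := suppPM (Pc := fun m => ad m = k0 /\ ~ Qp m) HP Shl Sgl; exact: H mu Hmu.
have Srest : suppP (fun m => (k0 < ad m)%N) (h' * g - hl * gl).
  have -> : h' * g - hl * gl = hl * gh + hh * g by rewrite /hh /gh; ring.
  apply: suppPD.
    apply: (suppPM (Pa := fun m => ad m = k0 /\ ~ Qp m) (Pb := fun m => (0 < ad m)%N)) => //.
    by move=> a b [Ha _] Hb; rewrite /ad adegD -/ad Ha -[X in (X < _)%N]addn0 ltn_add2l.
  apply: (suppPM (Pa := fun m => (k0 < ad m)%N) (Pb := fun _ => True)) => //.
  by move=> a b Ha _; rewrite /ad adegD -/ad; apply: leq_trans Ha (leq_addr _ _).
have : mu \in msupp (h' * g).
  rewrite mcoeff_msupp.
  have -> : (h' * g)@_mu = (hl * gl)@_mu + (h' * g - hl * gl)@_mu.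
    by rewrite mcoeffB addrC subrK.
  have -> : (h' * g - hl * gl)@_mu = 0.
    apply/eqP; rewrite mcoeff_eq0; apply/negP => /Srest.
    by case: Smu => -> _; rewrite ltnn.
  by rewrite addr0 -mcoeff_msupp.
by move/Hh'g; case: Smu.
Qed.

End S.

Lemma mle_mdeg n (b : 'X_{1..n}) i : (b i <= mdeg b)%N.
Proof. by rewrite mdegE (bigD1 i) //= leq_addr. Qed.

Unset Implicit Arguments.
Theorem lemma6p1 (K : fieldType) (d : nat) (I J : {mpoly K[d]} -> Prop) :
  is_ideal I -> monomial_ideal I -> is_ideal J ->
  monomial_ideal (saturation I J).
Proof.
move=> HI HmI HJ.
apply: mono_of; first exact: sat_ideal.
move=> f [k Hk] e He.
pose U := fun m : 'X_{1..d} => I 'X_[m].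
have Uup : forall a b, U a -> U (a + b)%MM.
  move=> a b Ha; rewrite /U mpolyXD mulrC; by case: HI => _ _ HTM; apply: HTM.
pose good := fun A : {set 'I_d} => exists b, offA A b /\ U (e + b)%MM.
have Step1 : forall A, ~ good A -> forall g, J g -> suppP (fun m => (0 < adeg A m)%N) g.
  move=> A Hbad g Hg dl Hdl; rewrite lt0n; apply/negP => /eqP Hd0.
  apply: Hbad.
  pose Qp := fun m : 'X_{1..d} => exists b, offA A b /\ U (m + b)%MM.
  have Qup : forall a b, Qp a -> Qp (a + b)%MM.
    move=> a b [b' [Hb' Hu]]; exists b'; split => //.
    have -> : (a + b + b')%MM = (a + b' + b)%MM.
      by apply/mnmP => i; rewrite !mnmDE; lia.
    exact: Uup.
  have Qoff : forall a b, offA A b -> Qp (a + b)%MM -> Qp a.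
    move=> a b Hb [b' [Hb' Hu]]; exists (b + b')%MM; split.
      by move=> i Hi; rewrite mnmDE Hb // Hb'.
    by rewrite addmA.
  have Hfg : forall j, suppP Qp (f * g ^+ j) -> suppP Qp f.
    elim=> [|j IH]; first by rewrite expr0 mulr1.
    move=> H; apply: IH; apply: (core (A := A) (g := g)) => //.
      by exists dl => //; apply: adeg0_off.
    by rewrite -mulrA -exprSr.
  have : suppP Qp f.
    apply: (Hfg k); have := Hk _ (pow_expr k Hg).
    move/(mono_char HI HmI) => H m Hm; exists 0%MM; split; last by rewrite addm0; apply: H.
    by move=> i _; rewrite mnm0E.
  by move/(_ e He).
have Step2 : exists c, forall A, good A ->
    exists b, [/\ offA A b, U (e + b)%MM & forall i, (b i <= c)%N].
  suff : forall s : seq {set 'I_d}, exists c, forall A, A \in s -> good A ->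
      exists b, [/\ offA A b, U (e + b)%MM & forall i, (b i <= c)%N].
    by case/(_ (enum [set: {set 'I_d}])) => c Hc; exists c => A; apply: Hc; rewrite mem_enum inE.
  elim=> [|A s [c Hc]]; first by exists 0%N.
  case: (Classical_Prop.classic (good A)) => [[b [Hb1 Hb2]]|Hng].
    exists (c + mdeg b)%N => A'; rewrite inE => /orP[/eqP -> _|HA' HgA'].
      by exists b; split => // i; apply: leq_trans (mle_mdeg b i) (leq_addl _ _).
    case: (Hc A' HA' HgA') => b' [? ? Hb']; exists b'; split => // i.
    exact: leq_trans (Hb' i) (leq_addr _ _).
  exists c => A'; rewrite inE => /orP[/eqP -> //|]; exact: Hc.
case: Step2 => c Hc.
have Step3 : forall n g, ideal_pow J n g ->
    suppP (fun m => forall A, ~ good A -> (n <= adeg A m)%N) g.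
  elim=> [|n IH] g Hg; first by move=> m _ A _.
  move: Hg => /=; apply: ideal_gen_min.
    apply: suppP_ideal => a b Ha A HA; rewrite adegD; exact: leq_trans (Ha A HA) (leq_addl _ _).
  move=> h [a [b [Ha Hb ->]]].
  apply: (suppPM (Pa := fun m => forall A, ~ good A -> (n <= adeg A m)%N)
                 (Pb := fun m => forall A, ~ good A -> (0 < adeg A m)%N)).
  - move=> x y Hx Hy A HA; rewrite adegD -addn1; exact: leq_add (Hx A HA) (Hy A HA).
  - exact: IH.
  - by move=> m Hm A HA; apply: (Step1 A HA b Hb).
exists (d * c).+1 => g Hg; apply/(mono_char HI HmI).
apply: (suppPM (Pa := fun m => m = e) (Pb := fun m => forall A, ~ good A -> ((d * c).+1 <= adeg A m)%N)).
- move=> a gm -> Hgm.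
  pose A := [set i | (gm i < c)%N].
  case: (Classical_Prop.classic (good A)) => [HgA|HnA]; last first.
    exfalso; move: (Hgm A HnA); apply/negP; rewrite -leqNgt.
    apply: (@leq_trans (\sum_(i in A) c)%N).
      by apply: leq_sum => i; rewrite inE => /ltnW.
    rewrite sum_nat_const; apply: leq_mul => //.
    by rewrite -[X in (_ <= X)%N]card_ord max_card.
  case: (Hc A HgA) => b [Hb1 Hb2 Hb3].
  have Hbg : forall i, (b i <= gm i)%N.
    move=> i; case: (boolP (i \in A)) => Hi; first by rewrite Hb1.
    by move: Hi; rewrite inE -leqNgt; apply: leq_trans.
  have -> : (e + gm)%MM = (e + b + (gm - b))%MM.
    apply/mnmP => i; rewrite !mnmDE mnmBE; have := Hbg i; lia.
  exact: Uup.
- exact: suppPX.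
- exact: Step3.
Qed.
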